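(* Let $t\ge 2$ and $m,n\ge1$ be integers. If there exists an MS$(m,t)$ and there exists an $m$-SCMS$(n,t-1)$, then there exists an MS$(mn,t)$.
   Context: $I_k=\{0,1,\dots,k-1\}$. An $n\times n$ integer matrix is a general magic square if all row sums, column sums, and the two diagonal sums $\sum_i a_{i,i}$, $\sum_i a_{i,n-1-i}$ are equal. $M$ is a general $t$-multimagic square if the entrywise powers $M^{*e}=(m_{i,j}^e)$, $e=1,\dots,t$, are all general magic squares. An MS$(n,t)$ is a general $t$-multimagic $n\times n$ square whose entries are exactly $0,1,\dots,n^2-1$; MS$(n,1)$ is written MS$(n)$. For $e\ge0$ let $S_e(n)=\frac1n\sum_{k=0}^{n^2-1}k^e$. An $m$-SCMS$(n,t)$ (set of $m$ complementary $t$-multimagic squares) is a list $B_0,\dots,B_{m-1}$ of (not necessarily distinct) MS$(n,t)$s, $B_s=(b^{(s)}_{i,j})$, such that: $\sum_{s\in I_m}\sum_{j\in I_n}(b^{(s)}_{i,j})^{t+1}=mS_{t+1}(n)$ for every $i\in I_n$; $\sum_{s\in I_m}\sum_{i\in I_n}(b^{(s)}_{i,j})^{t+1}=mS_{t+1}(n)$ for every $j\in I_n$; $\sum_{s\in I_m}\sum_{i\in I_n}(b^{(s)}_{i,i})^{t+1}=mS_{t+1}(n)$; and $\sum_{s\in I_m}\sum_{i\in I_n}(b^{(s)}_{i,n-1-i})^{t+1}=mS_{t+1}(n)$. An $m$-SCMS$(n,1)$ is written $m$-SCMS$(n)$. *)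

(* Defs.v *)
From HB Require Import structures.
From mathcomp Require Import all_boot all_order all_algebra.
Set Implicit Arguments. Unset Strict Implicit. Unset Printing Implicit Defensive.
Import GRing.Theory Num.Theory.

(* Squares are n x n matrices with natural entries (the entries of every
   square considered here are 0, ..., n^2-1, hence nonnegative). *)

Definition magic_pow (n : nat) (A : 'M[nat]_n) (e : nat) : Prop :=
  exists c : nat,
    [/\ forall i : 'I_n, (\sum_(j < n) A i j ^ e)%N = c,
        forall j : 'I_n, (\sum_(i < n) A i j ^ e)%N = c,
        (\sum_(i < n) A i i ^ e)%N = c
      & (\sum_(i < n) A i (rev_ord i) ^ e)%N = c].

Definition multimagic (n t : nat) (A : 'M[nat]_n) : Prop :=
  forall e : nat, (1 <= e <= t)%N -> magic_pow A e.

Definition entries_exact (n : nat) (A : 'M[nat]_n) : Prop :=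
  perm_eq [seq A ij.1 ij.2 | ij <- enum {: 'I_n * 'I_n}]
          (iota 0 (n ^ 2)).

Definition MS (n t : nat) (A : 'M[nat]_n) : Prop :=
  entries_exact A /\ multimagic t A.

Definition S_ (e n : nat) : rat :=
  (((\sum_(k < n ^ 2) k ^ e)%N)%:R / n%:R)%R.

Definition SCMS (m n t : nat) (B : 'I_m -> 'M[nat]_n) : Prop :=
  [/\ forall s : 'I_m, MS t (B s),
      forall i : 'I_n,
        (((\sum_(s < m) \sum_(j < n) (B s i j) ^ t.+1)%N)%:R = m%:R * S_ t.+1 n :> rat)%R,
      forall j : 'I_n,
        (((\sum_(s < m) \sum_(i < n) (B s i j) ^ t.+1)%N)%:R = m%:R * S_ t.+1 n :> rat)%R,
      (((\sum_(s < m) \sum_(i < n) (B s i i) ^ t.+1)%N)%:R = m%:R * S_ t.+1 n :> rat)%R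
    & (((\sum_(s < m) \sum_(i < n) (B s i (rev_ord i)) ^ t.+1)%N)%:R
        = m%:R * S_ t.+1 n :> rat)%R].

(* Main.v *)
Require Import Defs.
From HB Require Import structures.
From mathcomp Require Import all_boot all_order all_algebra zify.
Set Implicit Arguments. Unset Strict Implicit. Unset Printing Implicit Defensive.

Definition dls m (L : 'I_m -> 'I_m -> 'I_m) : Prop :=
  [/\ forall i, injective (L i), forall j, injective (fun i => L i j),
      injective (fun i => L i i) & injective (fun i => L i (rev_ord i))].

Definition dlsT (T : finType) (r : T -> T) (f : T -> T -> T) : Prop :=
  [/\ forall i, injective (f i), forall j, injective (fun i => f i j),
      injective (fun i => f i i) & injective (fun i => f i (r i))].

Lemma dlsT_transfer (T : finType) r f m (e : 'I_m -> T) :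
  dlsT r f -> injective e -> (forall i, e (rev_ord i) = r (e i)) -> #|T| = m ->
  exists L, @dls m L.
Proof.
move=> [h1 h2 h3 h4] ie er cT.
pose c (x : T) : 'I_m := cast_ord cT (enum_rank x).
have ic : injective c by move=> x y /cast_ord_inj /enum_rank_inj.
exists (fun i j => c (f (e i) (e j))); split.
- by move=> i j1 j2 /ic /h1 /ie.
- by move=> j i1 i2 /ic /(h2 (e j)) /ie.
- by move=> i1 i2 /ic /h3 /ie.
- by move=> i1 i2 /ic; rewrite !er => /h4 /ie.
Qed.

Definition prol (T : finType) (f : T -> T -> T) (s si : T -> T) (x y : option T) : option T :=
  match x, y with
  | None, None => None
  | None, Some y => Some (f (si y) y)
  | Some x, None => Some (f x (s x))
  | Some x, Some y => if y == s x then None else Some (f x y)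
  end.

Lemma prol_dls (T : finType) r f s si :
  dlsT r f -> cancel s si -> cancel si s -> injective (fun x => f x (s x)) ->
  (forall x, s x != x) -> (forall x, s x != r x) -> dlsT (omap r) (@prol T f s si).
Proof.
move=> [h1 h2 h3 h4] ssi sis ht hd ha.
have sinj : injective s := can_inj ssi.
split.
- case=> [x|] [y1|] [y2|] //=.
  + case: eqP => e1; case: eqP => e2 //; first by rewrite e1 e2.
    by move=> [] /h1 ->.
  + case: eqP => e1 // [] /h1 e; by rewrite e in e1.
  + case: eqP => e1 // [] /h1 e; by rewrite e in e1.
  + move=> [] e; have := ht (si y1) (si y2); rewrite !sis => /(_ e) e'.
    by rewrite -[y1]sis e' sis.
- case=> [y|] [x1|] [x2|] //=.
  + case: eqP => e1; case: eqP => e2 //.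
      by move=> _; apply/congr1/sinj; rewrite -e1 -e2.
    by move=> [] /h2 ->.
  + case: eqP => e1 // [] /h2 e; by [rewrite e sis in e1 | rewrite -e sis in e1].
  + case: eqP => e1 // [] /h2 e; by [rewrite e sis in e1 | rewrite -e sis in e1].
  + by move=> [] /ht ->.
- have hd' x : (x == s x) = false by rewrite eq_sym; apply/negbTE/hd.
  case=> [x1|] [x2|] //=; rewrite hd' ?hd' //.
  by move=> [] /h3 ->.
- have ha' x : (r x == s x) = false by rewrite eq_sym; apply/negbTE/ha.
  case=> [x1|] [x2|] //=; rewrite ha' ?ha' //.
  by move=> [] /h4 ->.
Qed.
Section Pair.
Variable k : nat.
Local Notation K := k.+1.

Lemma modK4 x y : x %% K = y %% K -> x < 4 * K -> y < 4 * K ->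
  x = y \/ x = y + K \/ x = y + 2 * K \/ x = y + 3 * K \/
  y = x + K \/ y = x + 2 * K \/ y = x + 3 * K.
Proof.
move=> e hx hy.
have dx := divn_eq x K; have dy := divn_eq y K.
have qx : x %/ K < 4 by rewrite ltn_divLR.
have qy : y %/ K < 4 by rewrite ltn_divLR.
move: dx dy qx qy; rewrite e.
case: (x %/ K) => [|[|[|[|?]]]]; case: (y %/ K) => [|[|[|[|?]]]] //; lia.
Qed.

Definition zk (x : nat) : 'I_K := inord (x %% K).
Lemma zkE x : zk x = x %% K :> nat.
Proof. by rewrite inordK // ltn_pmod. Qed.

Lemma zk_eq x y : zk x = zk y -> x %% K = y %% K.
Proof. by move=> h; rewrite -!zkE h. Qed.

Lemma zk1 (u : nat) : u < K -> (u + 1) %% K = (if u + 1 < K then u + 1 else 0).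
Proof.
move=> hu; case: ifP => h; first by rewrite modn_small.
have -> : u + 1 = K by lia.
by rewrite modnn.
Qed.


Lemma leq_eqb l x y : (l <= x) = (l <= y) -> (l <= x /\ l <= y) \/ (x < l /\ y < l).
Proof. by case: (leqP l x); case: (leqP l y) => // *; [left|right]. Qed.

Definition dd (u v : nat) := if u <= v then v - u else v + K - u.
Lemma dd_same u : dd u u = 0.
Proof. by rewrite /dd leqnn subnn. Qed.

Lemma dd_succ (u : 'I_K) : 0 < k -> dd u (zk (u + 1)) = 1.
Proof.
move=> k0; rewrite /dd zkE zk1 //; have := ltn_ord u.
case: (ltnP (u + 1) K) => h /=; case: ifPn => ?; lia.
Qed.


Local Notation T := (bool * 'I_K)%type.

Definition rr (p : T) : T := (~~ p.1, p.2).
Definition ss (p : T) : T := (p.1, zk (p.2 + 1)).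
Definition ssi (p : T) : T := (p.1, zk (p.2 + k)).

Definition dlsTT (f : T -> T -> T) :=
  [/\ dlsT rr f, injective (fun x => f x (ss x)), forall x, ss x != x
    & forall x, ss x != rr x].

Lemma ss_can : cancel ss ssi.
Proof.
case=> a u; congr (_, _); apply/val_inj; rewrite /= !zkE modnDml.
by rewrite -addnA add1n modnDr modn_small.
Qed.

Lemma ssi_can : cancel ssi ss.
Proof.
case=> a u; congr (_, _); apply/val_inj; rewrite /= !zkE modnDml.
by rewrite -addnA addn1 modnDr modn_small.
Qed.

Lemma ss_neq x : 0 < k -> ss x != x.
Proof.
move=> k0; case: x => a u; apply/negP => /eqP [] /(congr1 (@nat_of_ord _)); rewrite zkE zk1 //.
have := ltn_ord u; case: (ltnP (u + 1) K) => h /=; lia.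
Qed.

Lemma ss_neqr x : ss x != rr x.
Proof. by case: x => [[] u]. Qed.

Definition fE (p q : T) : T :=
  (p.1 (+) (K./2 <= dd p.2 q.2), zk (2 * q.2 + (K - p.2) + q.1)).

Lemma fE_dls : 0 < k -> ~~ odd K -> dlsTT fE.
Proof.
move=> k0 ev.
have hl : K = 2 * uphalf k.
  by have := odd_double_half K; rewrite (negbTE ev) add0n -muln2 mulnC.
set l := uphalf k in hl *.
have ltK (u : 'I_K) : u < K by [].
split; first split.
- case=> a u [b1 v1] [b2 v2] [] /(congr1 (addb a)); rewrite !addKb => h /zk_eq.
  have h1 := ltn_ord u; have h2 := ltn_ord v1; have h3 := ltn_ord v2.
  move: h; rewrite /dd => h E; have H := modK4 E; clear E.
  case: b1 b2 H => [] [] /= H; (case: (leqP u v1) h => c1; case: (leqP u v2) => c2 /leq_eqb h);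
  (have {H}H := H ltac:(lia) ltac:(lia)); try (exfalso; lia);
  congr (_, _); apply/ord_inj; lia.
- move=> [b v] [a1 u1] [a2 u2] [] h /zk_eq E.
  have h1 := ltn_ord u1; have h2 := ltn_ord u2; have h3 := ltn_ord v.
  have eu : u1 = u2.
    by apply/ord_inj; case: b E => /= E; have := modK4 E ltac:(lia) ltac:(lia); lia.
  subst u2; congr (_, _); move: h; case: (_ <= _); case: a1; case: a2 => //.
- have l0 : (l <= 0) = false by lia.
  move=> [a1 u1] [a2 u2] [] /=; rewrite !dd_same l0 !addbF => -> /zk_eq E.
  have h1 := ltn_ord u1; have h2 := ltn_ord u2.
  congr (_, _); apply/ord_inj; case: a2 E => /= E; have := modK4 E ltac:(lia) ltac:(lia); lia.
- have l0 : (l <= 0) = false by lia.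
  move=> [a1 u1] [a2 u2] [] /=; rewrite !dd_same l0 !addbF => -> /zk_eq E.
  have h1 := ltn_ord u1; have h2 := ltn_ord u2.
  congr (_, _); apply/ord_inj; case: a2 E => /= E; have := modK4 E ltac:(lia) ltac:(lia); lia.
- move=> [a1 u1] [a2 u2] [] /=; rewrite !dd_succ // => h /zk_eq.
  have h1 := ltn_ord u1; have h2 := ltn_ord u2.
  rewrite !zkE !zk1 //.
  have -> : a1 = a2 by move: h; case: (_ <= _); case: a1; case: a2.
  move=> E; clear h; congr (_, _); apply/ord_inj; move: E.
  case: (ltnP (u1 + 1) K) => c1; case: (ltnP (u2 + 1) K) => c2 /=;
  case: a2 => /= E; have := modK4 E ltac:(lia) ltac:(lia); lia.
- by move=> x; apply: ss_neq.
- exact: ss_neqr.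
Qed.

Definition fO (p q : T) : T :=
  (p.1 (+) q.1 (+) (dd p.2 q.2 == p.1), zk (2 * q.2 + (K - p.2) + (K - p.1))).

Lemma fO_dls : 0 < k -> odd K -> dlsTT fO.
Proof.
move=> k0 od.
have hl : K = 2 * uphalf k + 1.
  by have := odd_double_half K; rewrite od add1n -muln2 mulnC addn1 => ->.
set l := uphalf k in hl *.
split; first split.
- move=> [a u] [b1 v1] [b2 v2] [] + /zk_eq E.
  have h1 := ltn_ord u; have h2 := ltn_ord v1; have h3 := ltn_ord v2.
  have ev : v1 = v2.
    by apply/ord_inj; case: a E => /= E; have := modK4 E ltac:(lia) ltac:(lia); lia.
  subst v2; clear E; case: (_ == _); case: a; case: b1; case: b2 => //.
- move=> [b v] [a1 u1] [a2 u2] [] + /zk_eq; rewrite /dd /=.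
  have h1 := ltn_ord u1; have h2 := ltn_ord u2; have h3 := ltn_ord v.
  case: a1; case: a2; case: b => /=; case: (leqP u1 v) => c1; case: (leqP u2 v) => c2;
  case: eqP => e1; case: eqP => e2 => //= _ E; have H := modK4 E ltac:(lia) ltac:(lia);
  (try (exfalso; lia)); congr (_, _); apply/ord_inj; lia.
- move=> [a1 u1] [a2 u2] [] /=; rewrite !dd_same !addbb => + /zk_eq.
  have h1 := ltn_ord u1; have h2 := ltn_ord u2.
  case: a1; case: a2 => //= _ E; have H := modK4 E ltac:(lia) ltac:(lia);
  congr (_, _); apply/ord_inj; lia.
- move=> [a1 u1] [a2 u2] [] /=; rewrite !dd_same => + /zk_eq.
  have h1 := ltn_ord u1; have h2 := ltn_ord u2.
  case: a1; case: a2 => //= _ E; have H := modK4 E ltac:(lia) ltac:(lia);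
  congr (_, _); apply/ord_inj; lia.
- move=> [a1 u1] [a2 u2] [] /=; rewrite !dd_succ // !addbb => + /zk_eq.
  have h1 := ltn_ord u1; have h2 := ltn_ord u2.
  rewrite !zkE !zk1 //.
  case: a1; case: a2 => //= _;
  case: (ltnP (u1 + 1) K) => c1; case: (ltnP (u2 + 1) K) => c2 /= E;
  have H := modK4 E ltac:(lia) ltac:(lia); congr (_, _); apply/ord_inj; lia.
- by move=> x; apply: ss_neq.
- exact: ss_neqr.
Qed.

Definition fK : T -> T -> T := if odd K then fO else fE.

Lemma fK_dls : 0 < k -> dlsTT fK.
Proof. move=> k0; rewrite /fK; case: ifP => h; [exact: fO_dls | by apply: fE_dls; rewrite ?h]. Qed.

Definition ee (m i : nat) : T := if i < K then (false, zk i) else (true, zk (m.-1 - i)).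

Lemma dls_even m : 0 < k -> m = 2 * K -> exists L, @dls m L.
Proof.
move=> k0 hm; have [[h1 h2 h3 h4] _ _ _] := fK_dls k0.
apply: (@dlsT_transfer _ rr fK m (fun i => ee m i)).
- by split.
- move=> i j; rewrite /ee; have := ltn_ord i; have := ltn_ord j.
  case: (ltnP i K) => c1; case: (ltnP j K) => c2 hj hi //= [] /zk_eq;
  rewrite !modn_small; try lia; move=> e; apply/ord_inj; lia.
- move=> i; rewrite /ee /rr /=; have := ltn_ord i.
  case: (ltnP i K) => c1; case: (ltnP (m - i.+1) K) => c2 hi; try (exfalso; lia).
    by congr (_, _); congr zk; lia.
  by congr (_, _); congr zk; lia.
- by rewrite card_prod card_bool card_ord hm.
Qed.

Definition eo (m : nat) (i : nat) : option T := if i == K then None else Some (ee m i).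

Lemma dls_odd m : 0 < k -> m = 2 * K + 1 -> exists L, @dls m L.
Proof.
move=> k0 hm; have [H ht hd ha] := fK_dls k0.
have := prol_dls H ss_can ssi_can ht hd ha => H'.
apply: (@dlsT_transfer _ (omap rr) (prol fK ss ssi) m (fun i => eo m i)) => //.
- move=> i j; rewrite /eo /ee; have := ltn_ord i; have := ltn_ord j.
  case: (ltnP i K) => c1; case: (ltnP j K) => c2 hj hi;
  case: eqP => e1; case: eqP => e2 //= ; try (move=> _; apply/ord_inj; lia);
  move=> [] /zk_eq; rewrite !modn_small; try lia; move=> e; apply/ord_inj; lia.
- move=> i; rewrite /eo /ee /rr /=; have := ltn_ord i.
  case: (ltnP i K) => c1; case: (ltnP (m - i.+1) K) => c2 hi;
  case: eqP => e1; case: eqP => e2 //=; try (exfalso; lia);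
  by congr (Some (_, _)); congr zk; lia.
- by rewrite card_option card_prod card_bool card_ord hm addn1.
Qed.

End Pair.

Lemma dls_exists m : m != 2 -> m != 3 -> 0 < m -> exists L, @dls m L.
Proof.
move=> m2 m3 m0.
case: (leqP m 1) => hm.
  have -> : m = 1 by lia.
  exists (fun _ _ => ord0); split => [i|j||] x y _; by rewrite (ord1 x) (ord1 y).
have hd := odd_double_half m; rewrite -muln2 in hd.
case: (boolP (odd m)) => od; rewrite ?od in hd.
  apply: (@dls_odd (m./2).-1); lia.
apply: (@dls_even (m./2).-1); rewrite ?(negbTE od) in hd; lia.
Qed.

Lemma total_sum n (A : 'M[nat]_n) e : entries_exact A ->
  \sum_i \sum_j A i j ^ e = \sum_(x < n ^ 2) x ^ e.
Proof.
move=> hA; rewrite pair_big /= -big_enum.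
rewrite -(big_map (fun ij : 'I_n * 'I_n => A ij.1 ij.2) xpredT (fun v => v ^ e)).
rewrite (perm_big _ hA) -(big_mkord xpredT (fun x => x ^ e)) /index_iota subn0 //.
Qed.

Lemma magic_const n (A : 'M[nat]_n) e c : entries_exact A ->
  (forall i, \sum_j A i j ^ e = c) -> n * c = \sum_(x < n ^ 2) x ^ e.
Proof.
move=> hA hc; rewrite -(total_sum e hA) (eq_bigr (fun _ => c)) //.
by rewrite sum_nat_const card_ord.
Qed.

Lemma entry_inj n (A : 'M[nat]_n) : entries_exact A ->
  injective (fun ij : 'I_n * 'I_n => A ij.1 ij.2).
Proof.
move=> hA; apply/injectiveP; rewrite /injectiveb /dinjectiveb.
by rewrite (perm_uniq hA) iota_uniq.
Qed.

Lemma entry_lt n (A : 'M[nat]_n) i j : entries_exact A -> A i j < n ^ 2.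
Proof.
move=> hA; have : A i j \in iota 0 (n ^ 2).
  rewrite -(perm_mem hA); apply/mapP; exists (i, j) => //; by rewrite mem_enum.
by rewrite mem_iota.
Qed.

Definition Pb n (cB : nat -> nat) k := if k == 0 then n else cB k.
Definition Vt (m n t N : nat) (cA cB : nat -> nat) (K e : nat) :=
  \sum_(i < e.+1) 'C(e, i) * (if i == 0 :> nat then (if e == t then K else m * cB e)
                              else N ^ i * cA i * Pb n cB (e - i)).

Lemma line_sum m n t N (a : 'I_m -> nat) (bb : 'I_m -> 'I_n -> nat) cA cB K e :
  (forall i, 0 < i <= t -> \sum_j1 a j1 ^ i = cA i) ->
  (forall j1 k, 0 < k < t -> \sum_j2 bb j1 j2 ^ k = cB k) ->
  \sum_j1 \sum_j2 bb j1 j2 ^ t = K ->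
  0 < e <= t ->
  \sum_j1 \sum_j2 (N * a j1 + bb j1 j2) ^ e = Vt m n t N cA cB K e.
Proof.
move=> hA hB hK he; rewrite /Vt.
under eq_bigr do under eq_bigr do rewrite addnC expnDn.
under eq_bigr do rewrite exchange_big.
rewrite exchange_big; apply: eq_bigr => -[i hi] _ /=.
under eq_bigr do rewrite -big_distrr.
rewrite -big_distrr; congr (_ * _).
case: i hi => [|i] hi /=.
  under eq_bigr do under eq_bigr do rewrite subn0 expn0 muln1.
  case: eqP => [->|ne]; first exact: hK.
  rewrite (eq_bigr (fun _ => cB e)); last by move=> j1 _; apply: hB; lia.
  by rewrite sum_nat_const card_ord.
have hP : forall j1, \sum_j2 bb j1 j2 ^ (e - i.+1) = Pb n cB (e - i.+1).
  move=> j1; rewrite /Pb; case: eqP => [->|ne].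
    by rewrite (eq_bigr (fun _ => 1)) // sum_nat_const card_ord muln1.
  apply: hB; lia.
under eq_bigr do under eq_bigr do rewrite mulnC.
under eq_bigr do rewrite -big_distrr hP.
rewrite -big_distrl /=.
under eq_bigr do rewrite expnMn.
rewrite -big_distrr hA //; lia.
Qed.

Section Idx.
Variables m n : nat.
Local Notation M := m.+1.
Local Notation N := n.+1.

Lemma pack_lt (i : 'I_M) (j : 'I_N) : i * N + j < M * N.
Proof. have := ltn_ord i; have := ltn_ord j; nia. Qed.

Definition pack (i : 'I_M) (j : 'I_N) : 'I_(M * N) := Ordinal (pack_lt i j).
Definition hi (x : 'I_(M * N)) : 'I_M := inord (x %/ N).
Definition lo (x : 'I_(M * N)) : 'I_N := inord (x %% N).

Lemma hi_pack i j : hi (pack i j) = i.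
Proof.
apply/ord_inj; rewrite /hi /= divnMDl // divn_small // addn0 inordK //.
Qed.

Lemma lo_pack i j : lo (pack i j) = j.
Proof. by apply/ord_inj; rewrite /lo /= modnMDl modn_small // inordK. Qed.

Lemma pack_hilo x : pack (hi x) (lo x) = x.
Proof.
apply/ord_inj; rewrite /= !inordK ?ltn_pmod // -?divn_eq //.
by rewrite ltn_divLR.
Qed.

Lemma rev_pack i j : rev_ord (pack i j) = pack (rev_ord i) (rev_ord j).
Proof.
apply/ord_inj => /=; have := ltn_ord i; have := ltn_ord j; nia.
Qed.

Lemma sum_pack (F : 'I_(M * N) -> nat) :
  \sum_x F x = \sum_(i < M) \sum_(j < N) F (pack i j).
Proof.
rewrite pair_big /= (reindex (fun p : 'I_M * 'I_N => pack p.1 p.2)) //.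
apply: onW_bij; exists (fun x => (hi x, lo x)) => [[i j]|x] /=.
  by rewrite hi_pack lo_pack.
by rewrite pack_hilo.
Qed.

End Idx.

Definition cst n e := (\sum_(x < n ^ 2) x ^ e) %/ n.

Definition lines n (A : 'M[nat]_n) e c :=
  [/\ forall i, \sum_j A i j ^ e = c, forall j, \sum_i A i j ^ e = c,
      \sum_i A i i ^ e = c & \sum_i A i (rev_ord i) ^ e = c].

Lemma magic_lines n (A : 'M[nat]_n) e : 0 < n -> entries_exact A -> magic_pow A e ->
  lines A e (cst n e).
Proof.
move=> n0 hA [c [hr hc hd ha]].
have -> : cst n e = c by rewrite /cst -(magic_const hA hr) mulKn.
by split.
Qed.

Lemma nat_rat (x y : nat) : (x%:R = y%:R :> rat)%R -> x = y.
Proof. by move/eqP; rewrite Num.Theory.eqr_nat => /eqP. Qed.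

Lemma divmod_inj d a1 a2 b1 b2 : b1 < d -> b2 < d -> d * a1 + b1 = d * a2 + b2 ->
  a1 = a2 /\ b1 = b2.
Proof.
move=> h1 h2 E; have d0 : 0 < d by case: d h1 {h2 E}.
have := congr1 (fun z => z %/ d) E; have := congr1 (fun z => z %% d) E.
by rewrite /= !(mulnC d) !modnMDl !modn_small // !divnMDl // !divn_small // !addn0.
Qed.

Section Constr.
Variables (m n t : nat) (A : 'M[nat]_m.+1) (B : 'I_m.+1 -> 'M[nat]_n.+1)
  (L : 'I_m.+1 -> 'I_m.+1 -> 'I_m.+1).
Local Notation M := m.+1.
Local Notation N := n.+1.
Local Notation Nsq := (N ^ 2).

Definition CC : 'M[nat]_(M * N) :=
  \matrix_(x, y) (Nsq * A (hi x) (hi y) + B (L (hi x) (hi y)) (lo x) (lo y)).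

Lemma CC_pack i1 i2 j1 j2 :
  CC (pack i1 i2) (pack j1 j2) = Nsq * A i1 j1 + B (L i1 j1) i2 j2.
Proof. by rewrite mxE !hi_pack !lo_pack. Qed.

Lemma CC_exact : entries_exact A -> (forall s, entries_exact (B s)) -> entries_exact CC.
Proof.
move=> hA hB; rewrite /entries_exact.
set s := [seq _ | ij <- _].
have inj : injective (fun ij : 'I_(M * N) * 'I_(M * N) => CC ij.1 ij.2).
  move=> [x1 y1] [x2 y2] /=; rewrite !mxE => E.
  have [ea eb] := divmod_inj (entry_lt _ _ (hB _)) (entry_lt _ _ (hB _)) E.
  have [h1 h2] := @entry_inj _ A hA (hi x1, hi y1) (hi x2, hi y2) ea.
  rewrite h1 h2 in eb.
  have [l1 l2] := @entry_inj _ (B (L (hi x2) (hi y2))) (hB _) (lo x1, lo y1) (lo x2, lo y2) eb.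
  congr (_, _).
    by rewrite -[x1]pack_hilo -[x2]pack_hilo h1 l1.
  by rewrite -[y1]pack_hilo -[y2]pack_hilo h2 l2.
have sub : {subset s <= iota 0 ((M * N) ^ 2)}.
  move=> v /mapP [[x y] _ ->]; rewrite mem_iota /= add0n mxE expnMn.
  have := entry_lt (hi x) (hi y) hA; have := entry_lt (lo x) (lo y) (hB (L (hi x) (hi y))).
  set a := A _ _; set b := B _ _ _ => hb ha.
  apply: (@leq_trans (Nsq * a.+1)); first by rewrite mulnS addnC ltn_add2r.
  by rewrite mulnC leq_mul2r ha orbT.
have us : uniq s by rewrite map_inj_uniq ?enum_uniq.
have sz : size (iota 0 ((M * N) ^ 2)) <= size s.
  by rewrite size_iota size_map -cardE card_prod card_ord expnS expn1.
have [_ eq] := uniq_min_size us sub sz.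
exact: (uniq_perm us (iota_uniq _ _)).
Qed.

Lemma CC_magic : 2 <= t -> MS t A -> SCMS (t - 1) B -> dls L -> multimagic t CC.
Proof.
move=> ht [hA mA] [hB r c d a] [L1 L2 L3 L4].
have ht1 : (t - 1).+1 = t by lia.
rewrite ht1 in r c d a.
set K := \sum_s \sum_i B s i i ^ t.
have Kr i : \sum_s \sum_j B s i j ^ t = K by apply: nat_rat; rewrite r d.
have Kc j : \sum_s \sum_i B s i j ^ t = K by apply: nat_rat; rewrite c d.
have Ka : \sum_s \sum_i B s i (rev_ord i) ^ t = K by apply: nat_rat; rewrite a d.
have lA i : 0 < i <= t -> lines A i (cst M i) := fun h => magic_lines (ltn0Sn m) hA (mA i h).
have lB s k : 0 < k < t -> lines (B s) k (cst N k).
  move=> h; apply: (magic_lines (ltn0Sn n) (hB s).1 ((hB s).2 k _)); lia.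
move=> e he; exists (Vt M N t Nsq (cst M) (cst N) K e); split.
- move=> x; rewrite sum_pack -[x]pack_hilo.
  under eq_bigr do under eq_bigr do rewrite CC_pack.
  apply: (@line_sum _ _ _ _ (fun j1 => A (hi x) j1) (fun j1 j2 => B (L (hi x) j1) (lo x) j2)) => //.
  + by move=> i hi; have [-> _ _ _] := lA i hi.
  + by move=> j1 k hk; have [-> _ _ _] := lB (L (hi x) j1) k hk.
  + by rewrite -(Kr (lo x)) [RHS](reindex_inj (L1 (hi x))).
- move=> y; rewrite sum_pack -[y]pack_hilo.
  under eq_bigr do under eq_bigr do rewrite CC_pack.
  apply: (@line_sum _ _ _ _ (fun i1 => A i1 (hi y)) (fun i1 i2 => B (L i1 (hi y)) i2 (lo y))) => //.
  + by move=> i hi; have [_ -> _ _] := lA i hi.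
  + by move=> i1 k hk; have [_ -> _ _] := lB (L i1 (hi y)) k hk.
  + by rewrite -(Kc (lo y)) [RHS](reindex_inj (L2 (hi y))).
- rewrite sum_pack.
  under eq_bigr do under eq_bigr do rewrite CC_pack.
  apply: (@line_sum _ _ _ _ (fun i1 => A i1 i1) (fun i1 i2 => B (L i1 i1) i2 i2)) => //.
  + by move=> i hi; have [_ _ -> _] := lA i hi.
  + by move=> i1 k hk; have [_ _ -> _] := lB (L i1 i1) k hk.
  + by rewrite /K [RHS](reindex_inj L3).
- rewrite sum_pack.
  under eq_bigr do under eq_bigr do rewrite rev_pack CC_pack.
  apply: (@line_sum _ _ _ _ (fun i1 => A i1 (rev_ord i1))
                   (fun i1 i2 => B (L i1 (rev_ord i1)) i2 (rev_ord i2))) => //.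
  + by move=> i hi; have [_ _ _ ->] := lA i hi.
  + by move=> i1 k hk; have [_ _ _ ->] := lB (L i1 (rev_ord i1)) k hk.
  + by rewrite -Ka [RHS](reindex_inj L4).
Qed.

End Constr.

Lemma c31 : cst 3 1 = 12.
Proof. rewrite /cst -(big_mkord xpredT (fun x => x ^ _)) /index_iota /=. by rewrite !big_cons big_nil. Qed.
Lemma c32 : cst 3 2 = 68.
Proof. rewrite /cst -(big_mkord xpredT (fun x => x ^ _)) /index_iota /=. by rewrite !big_cons big_nil. Qed.

Lemma sum_I2 (F : 'I_2 -> nat) : \sum_i F i = F ord0 + F ord_max.
Proof. rewrite !big_ord_recl big_ord0 addn0; congr (_ + F _); exact/ord_inj. Qed.

Lemma sum_I3 (F : 'I_3 -> nat) : \sum_i F i = F ord0 + F (inord 1) + F ord_max.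
Proof.
rewrite !big_ord_recl big_ord0 addn0 addnA; congr (_ + F _ + F _); apply/ord_inj; by rewrite ?inordK.
Qed.

Lemma no_sol a b c : a + b + c = 12 -> a ^ 2 + b ^ 2 + c ^ 2 = 68 -> False.
Proof.
move=> h1 h2; have ha : a <= 12 by lia.
have hb : b <= 12 by lia.
have hc : c = 12 - a - b by lia.
move: h2; rewrite hc; clear h1 hc.
move: a ha => [|[|[|[|[|[|[|[|[|[|[|[|[|a]]]]]]]]]]]]] ha //;
move: b hb => [|[|[|[|[|[|[|[|[|[|[|[|[|b]]]]]]]]]]]]] hb //; move/eqP => //.
Qed.

Lemma no_ms2 t (A : 'M[nat]_2) : 0 < t -> MS t A -> False.
Proof.
move=> t0 [hA mA]; have [c [hr hc _ _]] := mA 1 ltac:(lia).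
have := hr ord0; have := hc ord0; rewrite !sum_I2 !expn1 => e1 e2.
have E : A ord0 ord_max = A ord_max ord0 by lia.
by have [] := @entry_inj _ A hA (ord0, ord_max) (ord_max, ord0) E.
Qed.

Lemma no_ms3 t (A : 'M[nat]_3) : 1 < t -> MS t A -> False.
Proof.
move=> t1 [hA mA].
have [r1 _ _ _] := magic_lines (ltn0Sn 2) hA (mA 1 ltac:(lia)).
have [r2 _ _ _] := magic_lines (ltn0Sn 2) hA (mA 2 ltac:(lia)).
have := r1 ord0; have := r2 ord0; rewrite c31 c32 !sum_I3 !expn1 => e2 e1.
exact: no_sol e1 e2.
Qed.

Theorem mainTheorem2 (t m n : nat) :
  (2 <= t)%N -> (1 <= m)%N -> (1 <= n)%N ->
  (exists A : 'M[nat]_m, MS t A) ->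
  (exists B : 'I_m -> 'M[nat]_n, SCMS (t - 1) B) ->
  exists C : 'M[nat]_(m * n), MS t C.
Proof.
move=> ht hm hn [A hA] [B hB].
have m2 : m != 2.
  by apply/eqP => e; move: A hA; rewrite e => A hA; apply: (no_ms2 (t := t)) hA; lia.
have m3 : m != 3.
  by apply/eqP => e; move: A hA; rewrite e => A hA; apply: (no_ms3 (t := t)) hA; lia.
have [L hL] := dls_exists m2 m3 hm.
case: m A B L hA hB hL hm {m2 m3} => [|m] // A B L hA hB hL _.
case: n B hB hn => [|n] // B hB _.
exists (CC A B L); split.
  apply: CC_exact; first by case: hA.
  by move=> s; case: hB => /(_ s) [].
exact: CC_magic.
Qed.
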